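(* Let $a,b\in C\ell_{1,2}$. Then (1) $L(a)L(a^+)L(a)=L(a)$, $L(a^+)L(a)L(a^+)=L(a^+)$, $L(a)L(a^+)=(L(a)L(a^+))^T$, $L(a^+)L(a)=(L(a^+)L(a))^T$; (2) $R(a)R(a^+)R(a)=R(a)$, $R(a^+)R(a)R(a^+)=R(a^+)$, $R(a)R(a^+)=(R(a)R(a^+))^T$, $R(a^+)R(a)=(R(a^+)R(a))^T$; (3) $(L(a)R(b))^+=L(a^+)R(b^+)$, where the left side is the Moore–Penrose inverse of the real matrix $L(a)R(b)$.
   Context: $C\ell_{1,2}$ is the real Clifford algebra generated by $i_1,i_2,i_3$ with $i_1^2=1$, $i_2^2=i_3^2=-1$ and $i_ti_m=-i_mi_t$ for $t\neq m$, with real basis $e_0=1$, $e_1=i_1$, $e_2=i_2$, $e_3=i_1i_2$, $e_4=i_3$, $e_5=i_1i_3$, $e_6=i_2i_3$, $e_7=i_1i_2i_3$. For $x=\sum_{t=0}^7x_te_t$ write $\overrightarrow{x}=(x_0,\dots,x_7)^T$. $L(a)$, $R(a)$ are the real $8\times8$ matrices with $\overrightarrow{ax}=L(a)\overrightarrow{x}$, $\overrightarrow{xa}=R(a)\overrightarrow{x}$ for all $x$. The prime of $a=\sum a_te_t$ is $a'=a_0+a_1e_1-a_2e_2+a_3e_3-a_4e_4+a_5e_5-a_6e_6-a_7e_7$. For every $a$ there is a unique $x\in C\ell_{1,2}$ with $axa=a$, $xax=x$, $(ax)'=ax$, $(xa)'=xa$, denoted $a^+$ (the Moore–Penrose inverse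 of $a$). The Moore–Penrose inverse $A^+$ of a real matrix $A$ is the unique real matrix $X$ with $AXA=A$, $XAX=X$, $(AX)^T=AX$, $(XA)^T=XA$. *)

(* Defs.v *)
From HB Require Import structures.
From mathcomp Require Import all_boot all_order all_algebra.
From mathcomp Require Import reals.
Set Implicit Arguments. Unset Strict Implicit. Unset Printing Implicit Defensive.
Import Order.TTheory GRing.Theory Num.Theory.
Local Open Scope ring_scope.

(* Real Clifford algebra Cl_{1,2}.  An element x = sum_t x_t e_t is
   represented by its coordinate column vector  ->x = (x_0,...,x_7)^T.
   Basis index t encodes a blade by a bitmask: bit 0 <-> i1, bit 1 <-> i2,
   bit 2 <-> i3 (so e3 = i1 i2, e5 = i1 i3, e6 = i2 i3, e7 = i1 i2 i3),
   matching the paper's basis. *)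
Definition cl (R : realType) := 'cV[R]_8.

(* e_s e_t = (-1)^(cl_neg s t) e_(s xor t), computed from i1^2 = 1,
   i2^2 = i3^2 = -1 and anticommutation. *)
Definition cl_neg_table : seq (seq bool) :=
 [:: [:: false; false; false; false; false; false; false; false];
     [:: false; false; false; false; false; false; false; false];
     [:: false; true; true; false; false; true; true; false];
     [:: false; true; true; false; false; true; true; false];
     [:: false; true; true; false; true; false; false; true];
     [:: false; true; true; false; true; false; false; true];
     [:: false; false; false; false; true; true; true; true];
     [:: false; false; false; false; true; true; true; true]].

Definition cl_neg (s t : nat) : bool := nth false (nth [::] cl_neg_table s) t.
Definition cl_idx (s t : nat) : nat := Nat.lxor s t.

Definition clmul (R : realType) (a b : cl R) : cl R :=
  \col_(k < 8) \sum_(s < 8) \sum_(t < 8)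
     (if cl_idx s t == k then (-1) ^+ cl_neg s t * a s 0 * b t 0 else 0).

Definition cl_basis (R : realType) (j : 'I_8) : cl R := delta_mx j 0.

Definition Lmx (R : realType) (a : cl R) : 'M[R]_8 :=
  \matrix_(k < 8, j < 8) clmul a (cl_basis R j) k 0.
Definition Rmx (R : realType) (a : cl R) : 'M[R]_8 :=
  \matrix_(k < 8, j < 8) clmul (cl_basis R j) a k 0.

Definition cl_prime_sign : seq bool :=
  [:: false; false; true; false; true; false; true; true].
Definition cl_prime (R : realType) (a : cl R) : cl R :=
  \col_(k < 8) ((-1) ^+ nth false cl_prime_sign k * a k 0).

Definition is_cl_mp (R : realType) (a x : cl R) : Prop :=
  [/\ clmul (clmul a x) a = a, clmul (clmul x a) x = x,
      cl_prime (clmul a x) = clmul a x & cl_prime (clmul x a) = clmul x a].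

Definition is_mx_mp (R : realType) n (A X : 'M[R]_n) : Prop :=
  [/\ A *m X *m A = A, X *m A *m X = X,
      (A *m X)^T = A *m X & (X *m A)^T = X *m A].

(* Main.v *)
Require Import Defs.
From HB Require Import structures.
From mathcomp Require Import all_boot all_order all_algebra.
From mathcomp Require Import reals ring.
From Stdlib Require Import PeanoNat.
Import GRing.Theory.
Set Implicit Arguments. Unset Strict Implicit.
Local Open Scope ring_scope.

Lemma idx_lt (k j : 'I_8) : (cl_idx k j < 8)%N.
Proof.
case: k => [[|[|[|[|[|[|[|[|//]]]]]]]] ?];
case: j => [[|[|[|[|[|[|[|[|//]]]]]]]] ?]; by [].
Qed.

Definition ox (k j : 'I_8) : 'I_8 := Ordinal (idx_lt k j).

Lemma oxP (s j k : 'I_8) : (cl_idx s j == k) = (s == ox k j).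
Proof.
apply/eqP/eqP => [H|->].
  apply: val_inj => /=.
  by rewrite -H /cl_idx Nat.lxor_assoc Nat.lxor_nilpotent Nat.lxor_0_r.
by rewrite /= /cl_idx Nat.lxor_assoc Nat.lxor_nilpotent Nat.lxor_0_r.
Qed.

Lemma LmxE (R : realType) (a : cl R) k j :
  Lmx a k j = (-1) ^+ cl_neg (ox k j) j * a (ox k j) 0.
Proof.
rewrite !mxE.
rewrite (eq_bigr (fun s : 'I_8 => if cl_idx s j == k then (-1) ^+ cl_neg s j * a s 0 else 0)).
  by rewrite -big_mkcond /= (big_pred1 (ox k j)) // => s /=; rewrite oxP.
move=> s _; rewrite (bigD1 j) //= big1 ?addr0.
  by rewrite !mxE eqxx /=; case: ifP => _; rewrite ?mulr1.
by move=> t /negPf tj; rewrite !mxE tj /=; case: ifP => _; rewrite ?mulr0.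
Qed.

Lemma RmxE (R : realType) (a : cl R) k j :
  Rmx a k j = (-1) ^+ cl_neg j (ox k j) * a (ox k j) 0.
Proof.
rewrite !mxE (bigD1 j) //= [X in _ + X]big1 ?addr0; last first.
  move=> s /negPf sj; apply: big1 => t _; rewrite !mxE sj /=.
  by case: ifP => _; rewrite ?mulr0 ?mul0r.
rewrite (eq_bigr (fun t : 'I_8 => if cl_idx j t == k then (-1) ^+ cl_neg j t * a t 0 else 0)).
  rewrite -big_mkcond /= (big_pred1 (ox k j)) // => s /=.
  by rewrite /cl_idx Nat.lxor_comm -/(cl_idx s j) oxP.
by move=> t _; rewrite !mxE eqxx /=; case: ifP => _; rewrite ?mulr1.
Qed.

Lemma clmulE (R : realType) (a x : cl R) : clmul a x = Lmx a *m x.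
Proof.
apply/matrixP => k i; rewrite !ord1 !mxE exchange_big /=; apply: eq_bigr => t _.
rewrite LmxE (eq_bigr (fun s : 'I_8 => if s == ox k t then (-1) ^+ cl_neg s t * a s 0 * x t 0 else 0)).
  by rewrite -big_mkcond /= big_pred1_eq.
by move=> s _; rewrite oxP.
Qed.

Definition mkcl {R : realType} (x0 x1 x2 x3 x4 x5 x6 x7 : R) : cl R :=
  \col_(i < 8) nth 0 [:: x0; x1; x2; x3; x4; x5; x6; x7] i.

Notation "a ` i" := (a (@inord 7 i) 0) (at level 3).

Lemma mkclE (R : realType) (a : cl R) :
  a = mkcl a`0 a`1 a`2 a`3 a`4 a`5 a`6 a`7.
Proof.
apply/matrixP => i j; rewrite ord1 mxE.
by case: i => [[|[|[|[|[|[|[|[|//]]]]]]]] p] /=; congr (a _ 0); apply: val_inj; rewrite /= inordK.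
Qed.
Definition pmul {R : realType} (a0 a1 a2 a3 a4 a5 a6 a7 b0 b1 b2 b3 b4 b5 b6 b7 : R) : cl R :=
  mkcl
  ((a0 * b0) + (a1 * b1) + (- a2 * b2) + (a3 * b3) + (- a4 * b4) + (a5 * b5) + (- a6 * b6) + (- a7 * b7))
  ((a0 * b1) + (a1 * b0) + (a2 * b3) + (- a3 * b2) + (a4 * b5) + (- a5 * b4) + (- a6 * b7) + (- a7 * b6))
  ((a0 * b2) + (a1 * b3) + (a2 * b0) + (- a3 * b1) + (a4 * b6) + (- a5 * b7) + (- a6 * b4) + (- a7 * b5))
  ((a0 * b3) + (a1 * b2) + (- a2 * b1) + (a3 * b0) + (- a4 * b7) + (a5 * b6) + (- a6 * b5) + (- a7 * b4))
  ((a0 * b4) + (a1 * b5) + (- a2 * b6) + (a3 * b7) + (a4 * b0) + (- a5 * b1) + (a6 * b2) + (a7 * b3))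
  ((a0 * b5) + (a1 * b4) + (a2 * b7) + (- a3 * b6) + (- a4 * b1) + (a5 * b0) + (a6 * b3) + (a7 * b2))
  ((a0 * b6) + (a1 * b7) + (a2 * b4) + (- a3 * b5) + (- a4 * b2) + (a5 * b3) + (a6 * b0) + (a7 * b1))
  ((a0 * b7) + (a1 * b6) + (- a2 * b5) + (a3 * b4) + (a4 * b3) + (- a5 * b2) + (a6 * b1) + (a7 * b0)).

Lemma clmulX (R : realType) (a0 a1 a2 a3 a4 a5 a6 a7 b0 b1 b2 b3 b4 b5 b6 b7 : R) :
  clmul (mkcl a0 a1 a2 a3 a4 a5 a6 a7) (mkcl b0 b1 b2 b3 b4 b5 b6 b7) =
  pmul a0 a1 a2 a3 a4 a5 a6 a7 b0 b1 b2 b3 b4 b5 b6 b7.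
Proof.
apply/matrixP => k i; rewrite ord1.
rewrite !mxE !big_ord_recl !big_ord0 !mxE.
by case: k => [[|[|[|[|[|[|[|[|//]]]]]]]] pk]; simpl; ring.
Qed.

Lemma clmulA (R : realType) (a b c : cl R) :
  clmul (clmul a b) c = clmul a (clmul b c).
Proof.
rewrite (mkclE a) (mkclE b) (mkclE c).
move: a`0 a`1 a`2 a`3 a`4 a`5 a`6 a`7 => a0 a1 a2 a3 a4 a5 a6 a7.
move: b`0 b`1 b`2 b`3 b`4 b`5 b`6 b`7 => b0 b1 b2 b3 b4 b5 b6 b7.
move: c`0 c`1 c`2 c`3 c`4 c`5 c`6 c`7 => c0 c1 c2 c3 c4 c5 c6 c7.
rewrite (clmulX a0 a1 a2 a3 a4 a5 a6 a7 b0 b1 b2 b3 b4 b5 b6 b7).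
rewrite (clmulX b0 b1 b2 b3 b4 b5 b6 b7 c0 c1 c2 c3 c4 c5 c6 c7) /pmul.
rewrite (clmulX _ _ _ _ _ _ _ _ c0 c1 c2 c3 c4 c5 c6 c7).
rewrite (clmulX a0 a1 a2 a3 a4 a5 a6 a7) /pmul /mkcl.
apply/matrixP => k i; rewrite !mxE.
by case: k => [[|[|[|[|[|[|[|[|//]]]]]]]] pk]; simpl; ring.
Qed.

Lemma RclmulE (R : realType) (b x : cl R) : Rmx b *m x = clmul x b.
Proof.
apply/matrixP => k i; rewrite !ord1 !mxE; apply: eq_bigr => s _.
rewrite RmxE (eq_bigr (fun t : 'I_8 => if t == ox k s then (-1) ^+ cl_neg s t * x s 0 * b t 0 else 0)).
  by rewrite -big_mkcond /= big_pred1_eq mulrAC.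
by move=> t _; rewrite /cl_idx Nat.lxor_comm -/(cl_idx t s) oxP.
Qed.

Lemma mx_ext (R : realType) (A B : 'M[R]_8) :
  (forall x : 'cV[R]_8, A *m x = B *m x) -> A = B.
Proof.
move=> H; apply/matrixP => i j.
by have := congr1 (fun M : 'cV[R]_8 => M i 0) (H (delta_mx j 0)); rewrite -!colE !mxE.
Qed.

Lemma Lmx_mul (R : realType) (a b : cl R) : Lmx (clmul a b) = Lmx a *m Lmx b.
Proof. by apply: mx_ext => x; rewrite -mulmxA -!clmulE clmulA. Qed.

Lemma Rmx_mul (R : realType) (a b : cl R) : Rmx (clmul a b) = Rmx b *m Rmx a.
Proof. by apply: mx_ext => x; rewrite -mulmxA !RclmulE clmulA. Qed.

Lemma LR_comm (R : realType) (a b : cl R) : Lmx a *m Rmx b = Rmx b *m Lmx a.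
Proof. by apply: mx_ext => x; rewrite -!mulmxA !RclmulE -!clmulE clmulA. Qed.

Lemma negL (k j : 'I_8) :
  cl_neg (cl_idx k j) k = cl_neg (cl_idx k j) j (+) nth false cl_prime_sign (cl_idx k j).
Proof.
case: k => [[|[|[|[|[|[|[|[|//]]]]]]]] ?];
case: j => [[|[|[|[|[|[|[|[|//]]]]]]]] ?]; by [].
Qed.

Lemma negR (k j : 'I_8) :
  cl_neg k (cl_idx k j) = cl_neg j (cl_idx k j) (+) nth false cl_prime_sign (cl_idx k j).
Proof.
case: k => [[|[|[|[|[|[|[|[|//]]]]]]]] ?];
case: j => [[|[|[|[|[|[|[|[|//]]]]]]]] ?]; by [].
Qed.

Lemma ox_sym (k j : 'I_8) : ox j k = ox k j.
Proof. by apply: val_inj; rewrite /= /cl_idx Nat.lxor_comm. Qed.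

Lemma Lmx_tr (R : realType) (a : cl R) : (Lmx a)^T = Lmx (cl_prime a).
Proof.
apply/matrixP => k j; rewrite mxE !LmxE ox_sym [cl_prime a _ _]mxE.
by rewrite /= negL signr_addb mulrA.
Qed.

Lemma Rmx_tr (R : realType) (a : cl R) : (Rmx a)^T = Rmx (cl_prime a).
Proof.
apply/matrixP => k j; rewrite mxE !RmxE ox_sym [cl_prime a _ _]mxE.
by rewrite /= negR signr_addb mulrA.
Qed.

Lemma LRmul (R : realType) (a b c d : cl R) :
  Lmx a *m Rmx b *m (Lmx c *m Rmx d) = Lmx (clmul a c) *m Rmx (clmul d b).
Proof.
by rewrite Lmx_mul Rmx_mul !mulmxA -[Lmx a *m Rmx b *m Lmx c]mulmxA -LR_comm !mulmxA.
Qed.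

Lemma LR_tr (R : realType) (c d : cl R) :
  (Lmx c *m Rmx d)^T = Lmx (cl_prime c) *m Rmx (cl_prime d).
Proof. by rewrite trmx_mul Lmx_tr Rmx_tr LR_comm. Qed.

Theorem proposition4p2 (R : realType) (a b ap bp : cl R) :
  is_cl_mp a ap -> is_cl_mp b bp ->
  [/\ [/\ Lmx a *m Lmx ap *m Lmx a = Lmx a,
          Lmx ap *m Lmx a *m Lmx ap = Lmx ap,
          Lmx a *m Lmx ap = (Lmx a *m Lmx ap)^T &
          Lmx ap *m Lmx a = (Lmx ap *m Lmx a)^T],
      [/\ Rmx a *m Rmx ap *m Rmx a = Rmx a,
          Rmx ap *m Rmx a *m Rmx ap = Rmx ap,
          Rmx a *m Rmx ap = (Rmx a *m Rmx ap)^T &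
          Rmx ap *m Rmx a = (Rmx ap *m Rmx a)^T] &
      is_mx_mp (Lmx a *m Rmx b) (Lmx ap *m Rmx bp)].
Proof.
case=> Ha1 Ha2 Ha3 Ha4 [Hb1 Hb2 Hb3 Hb4]; split; [split|split|split].
- by rewrite -!Lmx_mul Ha1.
- by rewrite -!Lmx_mul Ha2.
- by rewrite -Lmx_mul Lmx_tr Ha3.
- by rewrite -Lmx_mul Lmx_tr Ha4.
- by rewrite -!Rmx_mul -clmulA Ha1.
- by rewrite -!Rmx_mul -clmulA Ha2.
- by rewrite -Rmx_mul Rmx_tr Ha4.
- by rewrite -Rmx_mul Rmx_tr Ha3.
- by rewrite !LRmul -clmulA Ha1 Hb1.
- by rewrite !LRmul -clmulA Ha2 Hb2.
- by rewrite LRmul LR_tr Ha3 Hb4.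
- by rewrite LRmul LR_tr Ha4 Hb3.
Qed.
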